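(* There exists a simple undirected graph on $N$ nodes with adjacency matrix $\mathbf{A}\in\{0,1\}^{N\times N}$ such that for all $\mathbf{R}\in\mathbb{R}^{N\times 2}$ and $\mathbf{C}\in\mathbb{R}^{2\times N}$, it is not the case that $\operatorname{sign}(A_{ij})=\operatorname{sign}((\mathbf{R}\mathbf{C})_{ij})$ for all $i\neq j$.
   Context: $\operatorname{sign}:\mathbb{R}\to\{+,-\}$ takes the value $-$ on $(-\infty,0]$ and $+$ on $(0,\infty)$. Graphs have no self-loops and diagonal entries of adjacency matrices are ignored throughout. *)

(* Defs.v *)
From HB Require Import structures.
From mathcomp Require Import all_boot all_order all_algebra.
From mathcomp Require Import Rstruct.
From Stdlib Require Rdefinitions.
Set Implicit Arguments. Unset Strict Implicit. Unset Printing Implicit Defensive.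
Import Order.TTheory GRing.Theory Num.Theory.
Local Open Scope ring_scope.

(* sign : R -> {+,-}; encoded as bool: true = '+', false = '-'.
   sign x = - on (-oo,0], + on (0,oo). *)
Definition sign (x : Rdefinitions.R) : bool := (0 < x).

Definition is_simple_adj (N : nat) (A : 'M[Rdefinitions.R]_N) : Prop :=
  (forall i j, A i j = 0 \/ A i j = 1) /\
  (forall i j, A i j = A j i) /\
  (forall i, A i i = 0).

(* Main.v *)
Require Import Defs.
From mathcomp Require Import all_boot all_order all_algebra.
From mathcomp Require Import Rstruct.
From Stdlib Require Rdefinitions.
From mathcomp Require Import ring lra.
Set Implicit Arguments. Unset Strict Implicit. Unset Printing Implicit Defensive.
Import Order.TTheory GRing.Theory Num.Theory.
Local Open Scope ring_scope.

Definition e0 (i j : nat) : bool := (i < 3)%N && (3 <= j)%N && odd ((j - 3) %/ 2 ^ i).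
Definition adj (i j : nat) : bool := e0 i j || e0 j i.

Definition Am : 'M[Rdefinitions.R]_11 :=
  \matrix_(i, j) (if adj i j then 1 else 0).

Lemma P1 (a x : Rdefinitions.R) : (0 < x) = (0 < a) -> 0 <= a * x /\ (0 < a -> 0 < a * x).
Proof.
case: (ltrP 0 a) => ha hx.
  have : 0 < x by rewrite hx.
  by move=> h; split; [apply: mulr_ge0; lra | move=> _; apply: mulr_gt0].
have : x <= 0 by rewrite leNgt hx.
by move=> h; split; [apply: mulr_le0 | lra].
Qed.

Lemma P2 (a x : Rdefinitions.R) : (0 < x) = (a < 0) -> a * x <= 0 /\ (a < 0 -> a * x < 0).
Proof.
case: (ltrP a 0) => ha hx.
  have : 0 < x by rewrite hx.
  by move=> h; split; [apply: mulr_le0_ge0; lra | move=> _; rewrite nmulr_rlt0].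
have : x <= 0 by rewrite leNgt hx.
by move=> h; split; [apply: mulr_ge0_le0 | lra].
Qed.

Lemma L (ua ub uc : 'I_11 -> Rdefinitions.R) (a b c : Rdefinitions.R) :
  (forall j, a * ua j + b * ub j + c * uc j = 0) ->
  (forall s1 s2 s3 : bool, exists j, (0 < ua j) = s1 /\ (0 < ub j) = s2 /\ (0 < uc j) = s3) ->
  a = 0 /\ b = 0 /\ c = 0.
Proof.
move=> Hl Hp.
have [j [h1 [h2 h3]]] := Hp (0 < a) (0 < b) (0 < c).
have E := Hl j.
have [ha1 ha2] := P1 h1; have [hb1 hb2] := P1 h2; have [hc1 hc2] := P1 h3.
have ha : a <= 0 by rewrite leNgt; apply/negP => /ha2; lra.
have hb : b <= 0 by rewrite leNgt; apply/negP => /hb2; lra.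
have hc : c <= 0 by rewrite leNgt; apply/negP => /hc2; lra.
have [k [k1 [k2 k3]]] := Hp (a < 0) (b < 0) (c < 0).
have F := Hl k.
have [ka1 ka2] := P2 k1; have [kb1 kb2] := P2 k2; have [kc1 kc2] := P2 k3.
have ha' : 0 <= a by rewrite leNgt; apply/negP => /ka2; lra.
have hb' : 0 <= b by rewrite leNgt; apply/negP => /kb2; lra.
have hc' : 0 <= c by rewrite leNgt; apply/negP => /kc2; lra.
split; [|split]; lra.
Qed.

Lemma sA i j : (i < 11)%N -> (j < 11)%N -> sign (Am (inord i) (inord j)) = adj i j.
Proof.
move=> hi hj; rewrite /sign mxE !inordK //; case: adj; [exact: ltr01 | exact: ltxx].
Qed.

Lemma mul2 (Rm : 'M[Rdefinitions.R]_(11, 2)) (Cm : 'M[Rdefinitions.R]_(2, 11)) i j :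
  (Rm *m Cm) i j = Rm i ord0 * Cm ord0 j + Rm i ord_max * Cm ord_max j.
Proof.
rewrite mxE !big_ord_recr big_ord0 /= add0r.
congr (_ * _ + _ * _); congr (_ _ _); apply: val_inj => //.
Qed.

Theorem theorem1 :
  exists (N : nat) (A : 'M[Rdefinitions.R]_N),
    is_simple_adj A /\
    forall (Rm : 'M[Rdefinitions.R]_(N, 2)) (Cm : 'M[Rdefinitions.R]_(2, N)),
      ~ (forall i j : 'I_N, i != j -> sign (A i j) = sign ((Rm *m Cm) i j)).
Proof.
exists 11%N, Am; split.
  split; [|split].
  - by move=> i j; rewrite mxE; case: adj; [right|left].
  - by move=> i j; rewrite !mxE /adj orbC.
  - move=> i; rewrite mxE /adj orbb /e0.
    by case: (ltnP i 3) => h //=; rewrite leqNgt h.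
move=> Rm Cm H.
pose u (i : nat) (j : 'I_11) := (Rm *m Cm) (inord i) j.
have Hp : forall s1 s2 s3 : bool, exists j, (0 < u 0%N j) = s1 /\ (0 < u 1%N j) = s2 /\ (0 < u 2%N j) = s3.
  move=> s1 s2 s3; exists (inord (3 + s1 + 2 * s2 + 4 * s3)).
  rewrite /u -!/(sign _).
  by case: s1; case: s2; case: s3; rewrite -!H ?sA // -val_eqE /= !inordK.
pose a0 := Rm (inord 0) ord0; pose a1 := Rm (inord 0) ord_max.
pose b0 := Rm (inord 1) ord0; pose b1 := Rm (inord 1) ord_max.
pose c0 := Rm (inord 2) ord0; pose c1 := Rm (inord 2) ord_max.
have ua j : u 0%N j = a0 * Cm ord0 j + a1 * Cm ord_max j by rewrite /u mul2.
have ub j : u 1%N j = b0 * Cm ord0 j + b1 * Cm ord_max j by rewrite /u mul2.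
have uc j : u 2%N j = c0 * Cm ord0 j + c1 * Cm ord_max j by rewrite /u mul2.
have [_ [_ hg]] : (b0 * c1 - b1 * c0) = 0 /\ (c0 * a1 - c1 * a0) = 0 /\ (a0 * b1 - a1 * b0) = 0.
  apply: (@L (u 0%N) (u 1%N) (u 2%N) (b0 * c1 - b1 * c0) (c0 * a1 - c1 * a0) (a0 * b1 - a1 * b0)) => // j; rewrite ua ub uc; ring.
have [hb0 [ha0 _]] : b0 = 0 /\ - a0 = 0 /\ (0:Rdefinitions.R) = 0.
  apply: (@L (u 0%N) (u 1%N) (u 2%N) b0 (- a0) 0) => // j; rewrite ua ub uc.
  transitivity (- (a0 * b1 - a1 * b0) * Cm ord_max j); first ring.
  by rewrite hg; ring.
have [hb1 [ha1 _]] : b1 = 0 /\ - a1 = 0 /\ (0:Rdefinitions.R) = 0.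
  apply: (@L (u 0%N) (u 1%N) (u 2%N) b1 (- a1) 0) => // j; rewrite ua ub uc.
  transitivity ((a0 * b1 - a1 * b0) * Cm ord0 j); first ring.
  by rewrite hg; ring.
have [j [h _]] := Hp true true true.
move: h; rewrite ua.
have -> : a0 = 0 by lra.
have -> : a1 = 0 by lra.
by rewrite !mul0r addr0 ltxx.
Qed.
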